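(* Let $\nu\in(0,1)$ and $t>0$. For integers $m\ge0$ put $g_m(t):=t^{(1-2^{-m})\nu}f_\nu\big(t^{2^{-m}}\big)$ (so $g_0(t)=f_\nu(t)$). Then for every $m\in\mathbb{N}$, $$t^\nu\le g_m(t)\le g_{m-1}(t),$$ i.e. $$t^\nu\le\cdots\le t^{(1-\frac{1}{2^m})\nu}f_\nu\big(t^{\frac1{2^m}}\big)\le t^{(1-\frac{1}{2^{m-1}})\nu}f_\nu\big(t^{\frac1{2^{m-1}}}\big)\le\cdots\le t^{\frac{3\nu}{4}}f_\nu\big(t^{\frac14}\big)\le t^{\frac{\nu}{2}}f_\nu\big(t^{\frac12}\big)\le f_\nu(t),$$ and moreover $g_m(t)\to t^\nu$ as $m\to\infty$.
   Context: For $\nu\in(0,1)$, $f_\nu(t):=\dfrac{1}{\log t}\left\{\dfrac{1-\nu}{\nu}(t^\nu-1)+\dfrac{\nu}{1-\nu}(t-t^\nu)\right\}$ for $t>0$, $t\ne1$, and $f_\nu(1):=1$ (this is the weighted logarithmic mean $L_\nu(1,t)$). *)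

(* Defs.v *)
From Stdlib Require Import Reals.
Open Scope R_scope.

(* Weighted logarithmic mean f_nu(t) = L_nu(1,t), for t > 0 (f_nu(1) = 1). *)
Definition f_nu (nu t : R) : R :=
  if Req_EM_T t 1 then 1
  else / ln t * ((1 - nu) / nu * (Rpower t nu - 1)
                 + nu / (1 - nu) * (t - Rpower t nu)).

Definition g_m (nu : R) (m : nat) (t : R) : R :=
  Rpower t ((1 - / 2 ^ m) * nu) * f_nu nu (Rpower t (/ 2 ^ m)).

(* Main.v *)
Require Import Defs.
From Stdlib Require Import Reals Lra Psatz.
From Coquelicot Require Import Coquelicot.
Open Scope R_scope.

Definition FF nu x := f_nu nu (exp x).
Definition NN nu x := (1 - nu) / nu * (exp (nu * x) - 1) + nu / (1 - nu) * (exp x - exp (nu * x)).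

Lemma FF_0 nu : FF nu 0 = 1.
Proof. unfold FF, f_nu. rewrite exp_0. destruct (Req_EM_T 1 1); [reflexivity|lra]. Qed.

Lemma FF_eq nu x : x <> 0 -> FF nu x = NN nu x / x.
Proof.
  intros hx. unfold FF, f_nu, NN, Rpower. rewrite ln_exp.
  destruct (Req_EM_T (exp x) 1) as [e|e].
  - rewrite <- exp_0 in e. apply exp_inv in e. contradiction.
  - unfold Rdiv at 3. rewrite Rmult_comm. reflexivity.
Qed.

Lemma amgm nu x : 0 < nu < 1 -> exp (nu * x) <= nu * exp x + (1 - nu).
Proof.
  intros [h0 h1].
  assert (e1 : exp x = exp (nu * x) * exp ((1 - nu) * x)) by (rewrite <- exp_plus; f_equal; ring).
  assert (e2 : 1 = exp (nu * x) * exp (- (nu * x))) by (rewrite <- exp_plus, <- exp_0; f_equal; ring).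
  pose proof (exp_ineq1_le ((1 - nu) * x)). pose proof (exp_ineq1_le (- (nu * x))).
  pose proof (exp_pos (nu * x)).
  rewrite e1. rewrite e2 at 2.
  assert (exp (nu*x) * (nu * (1 + (1 - nu) * x) + (1 - nu) * (1 + - (nu * x))) <=
          exp (nu*x) * (nu * exp ((1 - nu) * x) + (1 - nu) * exp (- (nu * x)))).
  { apply Rmult_le_compat_l; [lra|]. nra. }
  nra.
Qed.

Lemma key nu x : 0 < nu < 1 -> exp (nu * x) * FF nu x <= FF nu (2 * x).
Proof.
  intros hnu. destruct (Req_dec x 0) as [->|hx].
  { rewrite !Rmult_0_r, FF_0, exp_0. lra. }
  rewrite !FF_eq by lra.
  set (p := exp (nu * x)). set (q := exp x).
  assert (hp2 : exp (nu * (2 * x)) = p * p) by (unfold p; rewrite <- exp_plus; f_equal; ring).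
  assert (hq2 : exp (2 * x) = q * q) by (unfold q; rewrite <- exp_plus; f_equal; ring).
  set (D := nu * q + (1 - nu) - p).
  set (E := nu * (q - p) + (1 - nu) * (p - 1)).
  assert (hD : 0 <= D) by (unfold D, p, q; pose proof (amgm nu x hnu); lra).
  assert (hE : 0 <= E / x).
  { destruct (Rlt_or_le 0 x) as [xp|xn].
    - assert (1 < p) by (unfold p; rewrite <- exp_0; apply exp_increasing; nra).
      assert (p < q) by (unfold p, q; apply exp_increasing; nra).
      apply Rlt_le, Rdiv_lt_0_compat; unfold E; nra.
    - assert (xn' : x < 0) by lra.
      assert (p < 1) by (unfold p; rewrite <- exp_0; apply exp_increasing; nra).
      assert (q < p) by (unfold p, q; apply exp_increasing; nra).
      assert (E < 0) by (unfold E; nra).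
      unfold Rdiv. apply Rlt_le. apply Rmult_neg_neg; [lra|]. apply Rinv_lt_0_compat; lra. }
  assert (id : NN nu (2 * x) / (2 * x) - p * (NN nu x / x) = D * (E / x) / (2 * nu * (1 - nu))).
  { unfold NN. rewrite hp2, hq2. fold p q. unfold D, E. field. lra. }
  assert (0 <= D * (E / x) / (2 * nu * (1 - nu))).
  { apply Rdiv_le_0_compat; [apply Rmult_le_pos; lra| nra]. }
  lra.
Qed.

Lemma NN_deriv nu : 0 < nu < 1 -> derivable_pt_lim (NN nu) 0 1.
Proof.
  intros hnu. apply is_derive_Reals. unfold NN.
  auto_derive; auto. rewrite Rmult_0_r, exp_0. field. lra.
Qed.

Lemma FF_cont nu : 0 < nu < 1 -> continuity_pt (FF nu) 0.
Proof.
  intros hnu. pose proof (NN_deriv nu hnu) as hd.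
  intros eps heps. destruct (hd eps heps) as [del hdel].
  exists del. split; [apply cond_pos|].
  intros x [_ hx]. simpl in *. unfold R_dist in *. rewrite FF_0.
  destruct (Req_dec x 0) as [->|x0].
  { rewrite FF_0. rewrite Rminus_diag, Rabs_R0. lra. }
  rewrite FF_eq by auto.
  specialize (hdel x x0). rewrite Rminus_0_r in hx. specialize (hdel hx).
  replace (NN nu (0 + x) - NN nu 0) with (NN nu x) in hdel; [exact hdel|].
  unfold NN. rewrite Rplus_0_l, Rmult_0_r, exp_0. ring.
Qed.

Lemma g_eq nu m t : 0 < t -> g_m nu m t =
  exp (nu * ln t - nu * (ln t / 2 ^ m)) * FF nu (ln t / 2 ^ m).
Proof.
  intros ht. unfold g_m, FF, Rpower. f_equal.
  - f_equal. field. apply pow_nonzero. lra.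
  - f_equal. f_equal. unfold Rdiv. ring.
Qed.

Theorem corollary2p10 (nu t : R) (hnu0 : 0 < nu) (hnu1 : nu < 1) (ht : 0 < t) :
  (forall m : nat, (1 <= m)%nat ->
     Rpower t nu <= g_m nu m t /\ g_m nu m t <= g_m nu (m - 1) t) /\
  Un_cv (fun m : nat => g_m nu m t) (Rpower t nu).
Proof.
  assert (hnu : 0 < nu < 1) by lra.
  set (L := ln t).
  set (G := fun x => exp (nu * L - nu * x) * FF nu x).
  assert (hcv : Un_cv (fun m : nat => g_m nu m t) (Rpower t nu)).
  { assert (hc : continuity_pt G 0).
    { unfold G. apply continuity_pt_mult; [|apply FF_cont; auto].
      apply (continuity_pt_comp (fun x => nu * L - nu * x) exp).
      - reg.
      - apply derivable_continuous_pt, derivable_pt_exp. }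
    pose proof (continuity_seq G _ 0 hc (cv_pow_half L)) as h.
    replace (Rpower t nu) with (G 0).
    - intros eps heps. destruct (h eps heps) as [N hN]. exists N. intros n hn.
      rewrite g_eq by auto. apply hN; auto.
    - unfold G, Rpower. rewrite FF_0. fold L. rewrite Rmult_0_r, Rminus_0_r, Rmult_1_r.
      f_equal; ring. }
  assert (hdec : forall k, g_m nu (S k) t <= g_m nu k t).
  { intros k. rewrite !g_eq by auto. fold L.
    set (x := L / 2 ^ S k).
    assert (hx : L / 2 ^ k = 2 * x) by (unfold x; simpl; field; apply pow_nonzero; lra).
    rewrite hx.
    assert (e : exp (nu * L - nu * x) = exp (nu * L - nu * (2 * x)) * exp (nu * x))
      by (rewrite <- exp_plus; f_equal; ring).
    rewrite e, Rmult_assoc. apply Rmult_le_compat_l; [apply Rlt_le, exp_pos|].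
    apply key; auto. }
  split; [|exact hcv].
  intros m hm. split.
  - exact (decreasing_ineq (fun m => g_m nu m t) _ hdec hcv m).
  - destruct m as [|k]; [lia|]. replace (S k - 1)%nat with k by lia. apply hdec.
Qed.
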